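(* Let $L$ be a nonabelian finite simple group whose order is divisible by a prime $r$, and let $x\in\mathrm{Aut}(L)$, $x\neq 1$. Suppose $x$ leaves invariant a subgroup $H\leq L$ and a normal subgroup $N$ of $H$, thus inducing an automorphism $\overline{x}$ of $\overline{H}=H/N$. Suppose also that $\overline{H}$ contains a simple $\overline{x}$-invariant subgroup $\overline{L}$ on which $\overline{x}$ acts nontrivially and whose order is divisible by $r$. Then $\beta_r(x,L)\leq\beta_r(\overline{x},\overline{L})$.
   Context: For a nonabelian finite simple group $L$ (identified with $\mathrm{Inn}(L)\leq\mathrm{Aut}(L)$), a nontrivial $x\in\mathrm{Aut}(L)$ and a prime $r$ dividing $|L|$, $\beta_r(x,L)$ denotes the smallest number $k$ such that there exist $g_1,\dots,g_k\in L$ for which $\langle x^{g_1},\dots,x^{g_k}\rangle\leq\langle L,x\rangle$ has order divisible by $r$. In $\beta_r(\overline{x},\overline{L})$, $\overline{x}$ is regarded (via its restriction) as an automorphism of $\overline{L}$. *)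

(* Defs.v *)
From mathcomp Require Import all_boot all_fingroup.
From mathcomp Require Import automorphism quotient gseries.
Set Implicit Arguments. Unset Strict Implicit. Unset Printing Implicit Defensive.
Import GroupScope.
Local Open Scope group_scope.

(* Automorphisms of a group L (in some finGroupType gT) are modelled, as in
   MathComp, by elements a of Aut L : {set {perm gT}}.  L is identified with
   Inn(L) via the inner-automorphism map y |-> conj_aut L y; thus the conjugate
   a^y of a by y in L (computed inside Aut L) is a ^ conj_aut L y. *)

Definition betab (gT : finGroupType) (r : nat) (L : {group gT})
  (a : {perm gT}) (k : nat) : bool :=
  [exists t : k.-tuple gT,
     all (fun y => y \in L) t &&
     (r %| #| << [set (a ^ conj_aut L y)%g | y in t] >> |)].

(* beta_r(a,L) <= beta_r(b,M):  beta_r(b,M) is the least k with betab r M b k;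
   the inequality says some k' <= that least k satisfies betab r L a k'. *)
Definition beta_le (gT rT : finGroupType) (r : nat)
  (L : {group gT}) (a : {perm gT}) (M : {group rT}) (b : {perm rT}) : Prop :=
  forall k, betab r M b k -> exists2 k', (k' <= k)%N & betab r L a k'.

(* Main.v *)
Require Import Defs.
From mathcomp Require Import all_boot all_fingroup.
From mathcomp Require Import automorphism quotient gseries.
From mathcomp Require Import all_solvable.
Import GroupScope.
Local Open Scope group_scope.

Section Ind.
Variables (gT : finGroupType) (H N : {group gT}) (Lbar : {group coset_of N}).
Hypothesis nNH : H \subset 'N(N).
Hypothesis sLbarH : Lbar \subset H / N.

Definition induces (p : {perm gT}) (q : {perm coset_of N}) : bool :=
  (q \in Aut Lbar) && [forall h in H, (p h \in H) &&
     ((coset N h \in Lbar) ==> (q (coset N h) == coset N (p h)))].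

Lemma inducesP (p : {perm gT}) (q : {perm coset_of N}) : reflect ((q \in Aut Lbar) /\ forall h, h \in H ->
   p h \in H /\ (coset N h \in Lbar -> q (coset N h) = coset N (p h)))
  (induces p q).
Proof.
apply: (iffP andP) => [[Aq /forall_inP F]|[Aq F]]; split => //.
  move=> h Hh; have /andP[-> /implyP I] := F h Hh; split=> // L.
  by apply/eqP; apply: I.
apply/forall_inP => h Hh; have [-> I] := F h Hh; apply/implyP => L.
by rewrite (I L).
Qed.

Lemma induces_mul (p p' : {perm gT}) (q q' : {perm coset_of N}) : induces p q -> induces p' q' ->
  induces (p * p') (q * q').
Proof.
move=> /inducesP[Aq F] /inducesP[Aq' F']; apply/inducesP; split.
  exact: groupM.
move=> h Hh; have [Hph E] := F h Hh; have [Hp'ph E'] := F' _ Hph.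
rewrite !permM; split => // Lh.
have Lp : coset N (p h) \in Lbar by rewrite -E //; exact: (Aut_closed Aq Lh).
by rewrite E // E'.
Qed.

Lemma induces1 : induces 1 1.
Proof.
apply/inducesP; split; first exact: group1.
by move=> h Hh; rewrite !perm1.
Qed.

Lemma inducesX (p : {perm gT}) (q : {perm coset_of N}) m : induces p q -> induces (p ^+ m) (q ^+ m).
Proof.
move=> I; elim: m => [|m IH]; first exact: induces1.
by rewrite !expgS; apply: induces_mul.
Qed.

Lemma induces_1 (q : {perm coset_of N}) : induces 1 q -> q = 1.
Proof.
move=> /inducesP[Aq F]; apply/permP => z; rewrite perm1.
case: (boolP (z \in Lbar)) => Lz; last exact: out_Aut Aq Lz.
have := subsetP sLbarH z Lz; case/morphimP => h Nh Hh Ez; rewrite Ez in Lz *.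
by have [_ E] := F h Hh; rewrite E // ?perm1.
Qed.

Lemma induces_order (p : {perm gT}) (q : {perm coset_of N}) : induces p q -> (#[q] %| #[p])%N.
Proof.
move=> I; rewrite order_dvdn; apply/eqP; apply: induces_1.
by rewrite -(expg_order p); apply: inducesX.
Qed.

End Ind.

Theorem lemma1p4 (gT : finGroupType) (L H N : {group gT}) (a : {perm gT})
  (r : nat)
  (simL : simple L) (nabL : ~~ abelian L)
  (pr_r : prime r) (rL : (r %| #|L|)%N)
  (aAut : a \in Aut L) (a_ntriv : a != 1)
  (sHL : H \subset L) (aH : a @: H = H)
  (nNH : N <| H) (aN : a @: N = N)
  (Lbar : {group coset_of N}) (sLbarH : Lbar \subset H / N)
  (simLbar : simple Lbar) (rLbar : (r %| #|Lbar|)%N)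
  (invLbar : forall h, h \in H -> coset N h \in Lbar -> coset N (a h) \in Lbar)
  (abar : {perm coset_of N}) (abarAut : abar \in Aut Lbar)
  (abar_def : forall h, h \in H -> coset N h \in Lbar ->
                abar (coset N h) = coset N (a h))
  (abar_ntriv : exists2 y, y \in Lbar & abar y != y) :
  beta_le r L a Lbar abar.
Proof.
move=> k /existsP[t /andP[/allP tL rB]].
exists k => //.
have nNH' : H \subset 'N(N) by case/andP: nNH.
pose lift (y : coset_of N) : gT := odflt 1 [pick h in H | coset N h == y].
have liftP y : y \in Lbar -> lift y \in H /\ coset N (lift y) = y.
  move=> Ly; rewrite /lift; case: pickP => [h /andP[Hh /eqP ->]|none] //=.
  have := subsetP sLbarH y Ly; case/morphimP => h Nh Hh E.
  by have := none h; rewrite Hh E eqxx.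
apply/existsP; exists (map_tuple lift t); apply/andP; split.
  apply/allP => h /mapP[y yt ->].
  by have [Hl _] := liftP y (tL y yt); apply: (subsetP sHL).
set A := << _ >>.
set B := << _ >> in rB.
pose X := [set q | [exists p in A, @induces gT H N Lbar p q]].
have gX : group_set X.
  apply/group_setP; split.
    by rewrite inE; apply/existsP; exists 1; rewrite group1 induces1.
  move=> q q'; rewrite !inE => /exists_inP[p Ap I] /exists_inP[p' Ap' I'].
  apply/exists_inP; exists (p * p'); first exact: groupM.
  exact: induces_mul.
pose XG := Group gX.
have sBX : B \subset XG.
  rewrite gen_subG; apply/subsetP => q /imsetP[y yt ->].
  have Ly := tL y yt; have [Hl El] := liftP y Ly.
  rewrite inE; apply/exists_inP; exists (a ^ conj_aut L (lift y)).
    by apply: mem_gen; apply/imsetP; exists (lift y) => //; apply: map_f.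
  set h0 := lift y in Hl El *.
  have Lh0 : h0 \in L := subsetP sHL _ Hl.
  have NLh0 : h0 \in 'N(L) := subsetP (normG L) _ Lh0.
  have NNh0 : h0 \in 'N(N) := subsetP nNH' _ Hl.
  have NLy : y \in 'N(Lbar) := subsetP (normG Lbar) _ Ly.
  apply/inducesP; split.
    apply: groupJ => //; apply: (subsetP (Aut_conj_aut Lbar Lbar)).
    exact: mem_morphim.
  move=> h Hh.
  have Hh1 : h ^ h0^-1 \in H by rewrite groupJ ?groupV.
  have Lh1 : h ^ h0^-1 \in L := subsetP sHL _ Hh1.
  have Ha1 : a (h ^ h0^-1) \in H by rewrite -aH; apply: imset_f.
  have La1 : a (h ^ h0^-1) \in L := subsetP sHL _ Ha1.
  have E1 : (conj_aut L h0)^-1 h = h ^ h0^-1.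
    by rewrite -{1}(conjgKV h0 h) -(norm_conj_autE NLh0 Lh1) permK.
  have Ep : (a ^ conj_aut L h0) h = a (h ^ h0^-1) ^ h0.
    by rewrite /conjg !permM E1 norm_conj_autE.
  rewrite Ep; split; first by rewrite groupJ.
  move=> Lch.
  have NNh : h \in 'N(N) := subsetP nNH' _ Hh.
  have NNh1 : h ^ h0^-1 \in 'N(N) := subsetP nNH' _ Hh1.
  have NNa1 : a (h ^ h0^-1) \in 'N(N) := subsetP nNH' _ Ha1.
  have Ec1 : coset N (h ^ h0^-1) = coset N h ^ y^-1.
    by rewrite -El morphJ ?groupV // morphV.
  have Lc1 : coset N (h ^ h0^-1) \in Lbar by rewrite Ec1 groupJ ?groupV.
  have Lc1' : coset N h ^ y^-1 \in Lbar by rewrite -Ec1.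
  have E2 : (conj_aut Lbar y)^-1 (coset N h) = coset N h ^ y^-1.
    by rewrite -{1}(conjgKV y (coset N h)) -(norm_conj_autE NLy Lc1') permK.
  rewrite /conjg !permM E2 -Ec1 abar_def // norm_conj_autE //; last first.
    by rewrite -abar_def //; apply: Aut_closed.
  by rewrite -El morphJ.
have [q Bq oq] := Cauchy pr_r rB.
have := subsetP sBX q Bq; rewrite inE => /exists_inP[p Ap I].
apply: dvdn_trans (order_dvdG Ap).
by rewrite -oq; apply: induces_order I.
Qed.
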